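(* Let $f:\mathbb{R}^n\to(-\infty,+\infty]$ be proper, lower semicontinuous and prox-bounded with threshold $\lambda_f>0$, let $0<\lambda<\lambda_f$ and let $U\subseteq\mathbb{R}^n$ be a nonempty open convex set. Then $\partial_p^\lambda f(x)$ is a singleton for every $x\in U$ if and only if $h_\lambda f=f$ on $U$ and $f$ is differentiable on $U$. Consequently, $\partial_p^\lambda f(x)$ is a singleton for every $x\in\mathbb{R}^n$ if and only if $f+\lambda^{-1}j$ is convex and $f$ is differentiable on $\mathbb{R}^n$.
   Context: $j:=\frac12\|\cdot\|^2$. $e_\lambda f(x):=\inf_y\{f(y)+\frac1{2\lambda}\|y-x\|^2\}$; prox-bounded with threshold $\lambda_f=\sup\{\lambda>0:e_\lambda f(x)>-\infty\text{ for some }x\}$. $v\in\partial_p^\lambda f(x)$ iff $x\in\operatorname{dom}f$ and $f(y)\ge f(x)+\langle v,y-x\rangle-\frac1{2\lambda}\|y-x\|^2$ for all $y$. $h_\lambda f:=-e_\lambda(-e_\lambda f)$ is the $\lambda$-proximal hull; $f$ is called $\lambda$-proximal at a point if $h_\lambda f$ and $f$ agree there. *)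

(* Defs.v *)
From HB Require Import structures.
From mathcomp Require Import all_boot all_order all_algebra.
From mathcomp Require Import all_classical all_reals all_analysis.
Set Implicit Arguments. Unset Strict Implicit. Unset Printing Implicit Defensive.
Import Order.TTheory GRing.Theory Num.Theory.
Import numFieldNormedType.Exports.
Local Open Scope classical_set_scope.
Local Open Scope ring_scope.

Section Prox.
Variables (R : realType) (n : nat).
Notation V := 'rV[R]_n.

Definition inner (x y : V) : R := \sum_(i < n) x ord0 i * y ord0 i.
Definition sqnorm (x : V) : R := inner x x.

Definition j (x : V) : R := sqnorm x / 2.

Definition proper_efun (f : V -> \bar R) : Prop :=
  (forall x, f x != -oo%E) /\ (exists x, f x \is a fin_num).

Definition moreau (lam : R) (f : V -> \bar R) (x : V) : \bar R :=
  ereal_inf [set (f y + (sqnorm (y - x) / (2 * lam))%:E)%E | y in [set: V]].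

Definition prox_bounded (f : V -> \bar R) : Prop :=
  exists lam : R, 0 < lam /\ exists x, (-oo < moreau lam f x)%E.

Definition prox_threshold (f : V -> \bar R) : \bar R :=
  ereal_sup [set lam%:E | lam in [set lam : R | 0 < lam /\ exists x, (-oo < moreau lam f x)%E]].

Definition prox_subdiff (lam : R) (f : V -> \bar R) (x : V) : set V :=
  [set v | (f x < +oo)%E /\
     forall y, (f x + (inner v (y - x) - sqnorm (y - x) / (2 * lam))%:E <= f y)%E].

Definition prox_hull (lam : R) (f : V -> \bar R) (x : V) : \bar R :=
  (- moreau lam (fun y => - moreau lam f y) x)%E.

Definition convex_efun (g : V -> \bar R) : Prop :=
  forall (x y : V) (t : R), 0 <= t <= 1 ->
    let z := t *: x + (1 - t) *: y in
    (g z <= t%:E * g x + (1 - t)%:E * g y)%E.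

Definition ediff_at (f : V -> \bar R) (x : V) : Prop :=
  f x \is a fin_num /\ differentiable (fun y => fine (f y)) x.

End Prox.

(* Main.v *)
Require Import Defs.
From HB Require Import structures.
From mathcomp Require Import all_boot all_order all_algebra.
From mathcomp Require Import all_classical all_reals all_analysis.
From mathcomp Require Import ring lra.
Import Order.TTheory GRing.Theory Num.Theory.
Import numFieldNormedType.Exports.
Local Open Scope classical_set_scope.
Local Open Scope ring_scope.
Set Implicit Arguments. Unset Strict Implicit. Unset Printing Implicit Defensive.

Section Alg.
Variables (R : realType) (n : nat).
Notation V := 'rV[R]_n.
Implicit Types (x y z a b : V).

Lemma innerC a b : inner a b = inner b a.
Proof. by rewrite /inner; apply: eq_bigr => i _; rewrite mulrC. Qed.

Lemma innerDl a b z : inner (a + b) z = inner a z + inner b z.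
Proof. by rewrite /inner -big_split /=; apply: eq_bigr => i _; rewrite mxE mulrDl. Qed.

Lemma innerDr a b z : inner z (a + b) = inner z a + inner z b.
Proof. by rewrite innerC innerDl !(innerC z). Qed.

Lemma innerZl (k : R) a b : inner (k *: a) b = k * inner a b.
Proof. by rewrite /inner mulr_sumr; apply: eq_bigr => i _; rewrite mxE mulrA. Qed.

Lemma innerZr (k : R) a b : inner a (k *: b) = k * inner a b.
Proof. by rewrite innerC innerZl innerC. Qed.

Lemma innerNl a b : inner (- a) b = - inner a b.
Proof. by rewrite -scaleN1r innerZl mulN1r. Qed.

Lemma innerNr a b : inner a (- b) = - inner a b.
Proof. by rewrite innerC innerNl innerC. Qed.

Lemma innerBl a b z : inner (a - b) z = inner a z - inner b z.
Proof. by rewrite innerDl innerNl. Qed.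

Lemma innerBr a b z : inner z (a - b) = inner z a - inner z b.
Proof. by rewrite innerDr innerNr. Qed.

Lemma inner0l a : inner 0 a = 0.
Proof. by rewrite /inner big1 // => i _; rewrite mxE mul0r. Qed.

Lemma inner0r a : inner a 0 = 0.
Proof. by rewrite innerC inner0l. Qed.

Lemma sqnorm_ge0 a : 0 <= sqnorm a.
Proof. by rewrite /sqnorm /inner sumr_ge0 // => i _; rewrite -expr2 sqr_ge0. Qed.

Lemma sqnorm_eq0 a : sqnorm a = 0 -> a = 0.
Proof.
move=> h; apply/rowP => i; rewrite mxE.
have : \sum_(k < n) a ord0 k * a ord0 k = 0 by [].
move/eqP; rewrite psumr_eq0; last by move=> k _; rewrite -expr2 sqr_ge0.
by move/allP/(_ i (mem_index_enum _)); rewrite /= mulf_eq0 orbb => /eqP.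
Qed.

Lemma sqnormD a b : sqnorm (a + b) = sqnorm a + 2 * inner a b + sqnorm b.
Proof. rewrite /sqnorm innerDl !innerDr (innerC b a); ring. Qed.

Lemma sqnormB a b : sqnorm (a - b) = sqnorm a - 2 * inner a b + sqnorm b.
Proof. rewrite /sqnorm innerBl !innerBr (innerC b a); ring. Qed.

Lemma sqnormN a : sqnorm (- a) = sqnorm a.
Proof. by rewrite /sqnorm innerNl innerNr opprK. Qed.

Lemma sqnormBC a b : sqnorm (a - b) = sqnorm (b - a).
Proof. by rewrite -sqnormN opprB. Qed.

Lemma sqnormZ (k : R) a : sqnorm (k *: a) = k ^+ 2 * sqnorm a.
Proof. rewrite /sqnorm innerZl innerZr; ring. Qed.

Lemma coord_le_norm a i : `|a ord0 i| <= `|a|.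
Proof.
rewrite (_ : `|a| = mx_norm a) // mx_normrE.
by apply/bigmax_geP; right => /=; exists (ord0, i).
Qed.

Lemma inner_le a b : `|inner a b| <= n%:R * `|a| * `|b|.
Proof.
rewrite /inner (le_trans (ler_norm_sum _ _ _)) //.
have -> : n%:R * `|a| * `|b| = \sum_(i < n) (`|a| * `|b|).
  by rewrite sumr_const card_ord -mulrA mulr_natl.
apply: ler_sum => i _; rewrite normrM ler_pM ?coord_le_norm //.
Qed.

Lemma sqnorm_le a : sqnorm a <= n%:R * `|a| ^+ 2.
Proof.
rewrite /sqnorm (le_trans (ler_norm _)) // expr2 mulrA; exact: inner_le.
Qed.

End Alg.

Section Der.
Variables (R : realType) (n : nat).
Notation V := 'rV[R]_n.

Lemma dlim (g : V -> R) x h : differentiable g x -> forall e, 0 < e ->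
  exists2 d, 0 < d & forall t, 0 < t -> t < d ->
   `|(g (x + t *: h) - g x) / t - 'd g x h| < e.
Proof.
move=> dg e e0.
have Hd : derivable g x h by exact: diff_derivable.
have := Hd; rewrite /derivable => /cvgrPdist_lt /(_ e e0).
rewrite -/(derive g x h) deriveE //.
move=> /nbhs_ballP [d /= d0 Hb]; exists d => // t t0 td.
have : ball 0 d t by rewrite /ball /= sub0r normrN gtr0_norm.
move=> /Hb /(_ (lt0r_neq0 t0)) /=.
by rewrite distrC (addrC x) mulrC.
Qed.
End Der.

Section Small.
Variables (R : realType) (n : nat).
Notation V := 'rV[R]_n.

Definition evpos (P : R -> Prop) := exists2 d : R, 0 < d & forall t, 0 < t -> t < d -> P t.

Lemma evposI P Q : evpos P -> evpos Q -> evpos (fun t => P t /\ Q t).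
Proof.
move=> [d1 d10 H1] [d2 d20 H2]; exists (Num.min d1 d2); first by rewrite lt_min d10.
by move=> t t0; rewrite lt_min => /andP[a b]; split; [apply: H1|apply: H2].
Qed.

Lemma evpos_ex P : evpos P -> exists t, 0 < t /\ P t.
Proof.
move=> [d d0 H]; exists (d / 2); split; first by rewrite divr_gt0.
by apply: H; rewrite ?divr_gt0 // ltr_pdivrMr // ltr_pMr // ltr1n.
Qed.

Lemma evpos_mono (P Q : R -> Prop) : (forall t, 0 < t -> P t -> Q t) -> evpos P -> evpos Q.
Proof. by move=> PQ [d d0 H]; exists d => // t t0 td; apply: PQ => //; apply: H. Qed.

Lemma evpos_small (K e : R) : 0 < e -> evpos (fun t => t * K < e).
Proof.
move=> e0; exists (e / (`|K| + 1)); first by rewrite divr_gt0 // ltr_pwDr.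
move=> t t0; rewrite ltr_pdivlMr ?ltr_pwDr // => h.
apply: le_lt_trans h; rewrite (le_trans (ler_norm _)) // normrM gtr0_norm //.
by rewrite ler_pM2l // lerDl.
Qed.

Lemma evpos_open (U : set V) x h : open U -> U x -> evpos (fun t => U (x + t *: h)).
Proof.
move=> Uo Ux; have : nbhs x U by exact: Uo.
move=> /nbhs_ballP [r r0 Hr].
have := evpos_small (`|h|) r0; apply: evpos_mono => t t0 th.
apply: Hr; rewrite -ball_normE /= opprD addNKr normrN normrZ gtr0_norm //.
Qed.

Definition grad (g : V -> R) x : V := \row_i ('d g x (delta_mx 0 i)).

Lemma gradE (g : V -> R) x h : 'd g x h = inner (grad g x) h.
Proof.
rewrite {1}(row_sum_delta h) linear_sum /inner; apply: eq_bigr => i _.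
by rewrite linearZ /= mxE mulrC.
Qed.

Lemma inner_inj (a b : V) : (forall h, inner a h = inner b h) -> a = b.
Proof.
move=> H; apply/eqP; rewrite -subr_eq0; apply/eqP; apply: sqnorm_eq0.
by rewrite /sqnorm innerBl !H subrr.
Qed.

End Small.

Section SubD.
Variables (R : realType) (n : nat).
Notation V := 'rV[R]_n.

Lemma sub_le_d (f : V -> \bar R) (lam : R) (U : set V) x v h :
  0 < lam -> open U -> U x -> (forall y, U y -> f y = (fine (f y))%:E) ->
  differentiable (fun y => fine (f y)) x -> prox_subdiff lam f x v ->
  inner v h <= 'd (fun y => fine (f y)) x h.
Proof.
move=> l0 Uo Ux Ufin dg [_ Hv]; set g := fun y => fine (f y).
apply/ler_addgt0Pr => e e0.
have e20 : 0 < e / 2 by rewrite divr_gt0.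
have [t [t0 [[Ut Hd] Hs]]] := evpos_ex (evposI (evposI (evpos_open h Uo Ux)
   (@dlim _ _ g x h dg _ e20)) (evpos_small (sqnorm h / (2 * lam)) e20)).
have := Hv (x + t *: h); rewrite (Ufin _ Ux) (Ufin _ Ut) -EFinD lee_fin.
rewrite (_ : x + t *: h - x = t *: h); last by rewrite addrAC subrr add0r.
rewrite innerZr sqnormZ -/(g x) -/(g (x + t *: h)).
set Q := ((g (x + t *: h) - g x) / t).
have QE : (g (x + t *: h) - g x = Q * t) by rewrite /Q divfK // lt0r_neq0.
move: Hd; rewrite -/Q => Hd Hin.
have H1 : (t * inner v h <= t * (Q + t * (sqnorm h / (2 * lam)))).
  move: Hin QE; rewrite !mulrA; move=> Hin QE; lra.
move: H1; rewrite ler_pM2l // => H1.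
have := le_lt_trans (ler_norm _) Hd; rewrite -/Q => Hd'.
move: Hs H1 Hd'; set D := 'd g x h; set s := t * _; lra.
Qed.
End SubD.

Section SubD2.
Variables (R : realType) (n : nat).
Notation V := 'rV[R]_n.

Lemma sub_eq_grad (f : V -> \bar R) (lam : R) (U : set V) x v :
  0 < lam -> open U -> U x -> (forall y, U y -> f y = (fine (f y))%:E) ->
  differentiable (fun y => fine (f y)) x -> prox_subdiff lam f x v ->
  v = grad (fun y => fine (f y)) x.
Proof.
move=> l0 Uo Ux Ufin dg Hv; apply: inner_inj => h; rewrite -gradE.
apply/eqP; rewrite eq_le (sub_le_d _ l0 Uo Ux Ufin dg Hv) /=.
have := sub_le_d (- h) l0 Uo Ux Ufin dg Hv.
by rewrite innerNr linearN lerN2.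
Qed.

Lemma moreau_le (lam : R) (f : V -> \bar R) z w :
  (moreau lam f z <= f w + (sqnorm (w - z) / (2 * lam))%:E)%E.
Proof. by apply: ereal_inf_lbound; exists w. Qed.

End SubD2.

Section Exist.
Variables (R : realType) (n : nat).
Notation V := 'rV[R]_n.

Lemma sub_of_hull (f : V -> \bar R) (lam : R) (U : set V) x :
  (forall y, f y != -oo%E) ->
  0 < lam -> open U -> U x -> (forall y, U y -> f y = (fine (f y))%:E) ->
  differentiable (fun y => fine (f y)) x -> prox_hull lam f x = f x ->
  prox_subdiff lam f x (grad (fun y => fine (f y)) x).
Proof.
move=> Hp l0 Uo Ux Ufin dg Hh; set g := fun y => fine (f y).
split; first by rewrite (Ufin _ Ux) ltry.
move=> y; set d := y - x; set v := grad g x.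
case Efy: (f y) => [r| |]; last 2 first.
- by rewrite leey.
- by move: (Hp y); rewrite Efy.
rewrite (Ufin _ Ux) -EFinD lee_fin -/(g x).
apply/ler_addgt0Pr => e e0.
have e40 : 0 < e / 4 by rewrite divr_gt0.
pose c := (2 * lam)^-1.
have [t [t0 [[[Ut Hd] Hs] t1]]] := evpos_ex (evposI (evposI (evposI
   (evpos_open (- d) Uo Ux) (@dlim _ _ g x (- d) dg _ e40))
   (evpos_small (sqnorm d * c) e40)) (evpos_small 1 ltr01)).
rewrite mulr1 in t1.
pose eps := t * (e / 4).
have eps0 : 0 < eps by rewrite mulr_gt0.
have Hinf : moreau lam (fun y => - moreau lam f y)%E x = (- (g x)%:E)%E.
  by rewrite -(Ufin _ Ux) -Hh /prox_hull oppeK.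
have Hfin : moreau lam (fun y => - moreau lam f y)%E x \is a fin_num by rewrite Hinf.
have [s [z _ <-]] := lb_ereal_inf_adherent eps0 Hfin.
rewrite -/(moreau lam (fun y => - moreau lam f y)%E x) Hinf.
have Mz := moreau_le lam f z x.
rewrite (Ufin _ Ux) -EFinD in Mz.
case EM : (moreau lam f z) Mz => [a| |] Mz; last 2 first.
- by rewrite leye_eq in Mz.
- by rewrite /= -EFinD.
rewrite -EFinD -EFinD lte_fin => H1.
set p := z - x.
have HA := moreau_le lam f z (x + t *: - d).
rewrite EM (Ufin _ Ut) -EFinD lee_fin in HA.
have HB := moreau_le lam f z y.
rewrite EM Efy -EFinD lee_fin in HB.
have E1 : y - z = d - p by apply/rowP => i; rewrite !mxE; ring.
have E2 : x + t *: - d - z = - (t *: d + p) by apply/rowP => i; rewrite !mxE; ring.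
rewrite E1 sqnormB in HB; rewrite E2 sqnormN sqnormD sqnormZ innerZl in HA.
have Dd : 'd g x (- d) = - inner v d by rewrite linearN gradE.
rewrite Dd -/(g (x + t *: - d)) in Hd HA.
set Q := (g (x + t *: - d) - g x) / t in Hd.
have QE : g (x + t *: - d) = g x + Q * t.
  rewrite /Q divfK ?lt0r_neq0 //; ring.
have Hd' := le_lt_trans (ler_norm _) Hd.
rewrite QE in HA; move: HA HB H1 Hd' Hs t1; rewrite /eps.
rewrite -!/c.
set A := sqnorm d; set B := inner d p; set P := sqnorm p; set D := inner v d.
set G := g x.
move=> HA HB H1 Hd' Hs t1.
have K1 : t * (- (e / 4)) < t * (Q + t * (A * c) + 2 * B * c) by lra.
rewrite ltr_pM2l // in K1.
have K2 : t * (e / 4) < e / 4 by rewrite gtr_pMl.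
lra.
Qed.
End Exist.

Section Hull.
Variables (R : realType) (n : nat).
Notation V := 'rV[R]_n.

Lemma hull_of_sub (f : V -> \bar R) (lam : R) x (r : R) v :
  0 < lam -> f x = r%:E -> prox_subdiff lam f x v -> prox_hull lam f x = f x.
Proof.
move=> l0 fx [_ Hv]; rewrite fx /prox_hull.
have l0' : lam != 0 by rewrite lt0r_neq0.
apply/eqP; rewrite eq_le; apply/andP; split.
- rewrite -[X in (_ <= X)%E]oppeK leeN2; apply: le_ereal_inf_tmp => _ [y _ <-].
  have := moreau_le lam f y x; rewrite fx -EFinD.
  case: (moreau lam f y) => [a| |] //=; last by rewrite leey.
  rewrite lee_fin -EFinD lee_fin sqnormBC; lra.
- pose z := x + lam *: v.
  rewrite -[X in (X <= _)%E]oppeK leeN2.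
  apply: le_trans; first by apply: ereal_inf_lbound; exists z.
  have Hz : ((r + sqnorm (x - z) / (2 * lam))%:E <= moreau lam f z)%E.
    apply: le_ereal_inf_tmp => _ [w _ <-].
    have := Hv w; rewrite fx.
    case: (f w) => [b| |] //=; last by move=> _; rewrite addye ?leey.
    rewrite -EFinD -EFinD !lee_fin => H.
    have E1 : w - z = (w - x) - lam *: v by apply/rowP => i; rewrite !mxE; ring.
    have E2 : x - z = - (lam *: v) by apply/rowP => i; rewrite !mxE; ring.
    rewrite E1 E2 sqnormN sqnormB sqnormZ innerZr (innerC (w - x)).
    set S := sqnorm (w - x); set B := inner v (w - x); set P := sqnorm v.
    have -> : (S - 2 * (lam * B) + lam ^+ 2 * P) / (2 * lam) =
        S / (2 * lam) - B + lam ^+ 2 * P / (2 * lam) by field.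
    move: H; rewrite -/S -/B; lra.
  move: Hz; case: (moreau lam f z) => [a| |] //=.
  + rewrite lee_fin -EFinD lee_fin sqnormBC; lra.
  + by rewrite leNye.
Qed.
End Hull.

Section Pair.
Variables (R : realType) (n : nat).
Notation V := 'rV[R]_n.
Variables (f : V -> \bar R) (lam : R) (x h v0 v : V) (gx g1 : R).
Hypotheses (l0 : 0 < lam) (fx : f x = gx%:E) (f1 : f (x + h) = g1%:E)
  (Hv0 : prox_subdiff lam f x v0) (Hv : prox_subdiff lam f (x + h) v).

Lemma pair_ineq y b : f y = b%:E ->
 inner (v - v0) (y - x - h) <= (b - gx - inner v0 (y - x) + sqnorm (y - x) / (2*lam))
    + (2 * sqnorm h - 2 * inner (y - x) h) / (2 * lam).
Proof.
move=> fy; have H1 := Hv0.2 (x + h); have H2 := Hv.2 y.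
rewrite fx f1 -EFinD lee_fin in H1; rewrite f1 fy -EFinD lee_fin in H2.
have E1 : x + h - x = h by apply/rowP => i; rewrite !mxE; ring.
have E2 : y - (x + h) = (y - x) - h by apply/rowP => i; rewrite !mxE; ring.
rewrite E1 in H1; rewrite E2 sqnormB in H2; rewrite innerBl !(innerBr (y - x)).
rewrite !(innerBr (y - x)) in H2.
move: H1 H2.
set S := sqnorm (y - x); set B := inner (y - x) h; set P := sqnorm h.
set c := (2 * lam)^-1.
lra.
Qed.

Lemma G_upper : g1 - gx - inner v0 h <= inner (v - v0) h + sqnorm h / (2 * lam).
Proof.
have H2 := Hv.2 x; rewrite f1 fx -EFinD lee_fin in H2.
have E2 : x - (x + h) = - h by apply/rowP => i; rewrite !mxE; ring.
rewrite E2 sqnormN innerNr in H2; rewrite innerBl; lra.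
Qed.

Lemma G_lower : - (sqnorm h / (2 * lam)) <= g1 - gx - inner v0 h.
Proof.
have H1 := Hv0.2 (x + h); rewrite fx f1 -EFinD lee_fin in H1.
have E1 : x + h - x = h by apply/rowP => i; rewrite !mxE; ring.
rewrite E1 in H1; lra.
Qed.
End Pair.

Section DiffO.
Variables (R : realType) (n : nat).
Notation V := 'rV[R]_n.

Lemma inner_linear (v0 : V) : linear (fun h : V => inner v0 h).
Proof. by move=> a u w; rewrite innerDr innerZr. Qed.

Lemma diff_of_o (g : V -> R) (x : V) (v0 : V) :
  (forall e, 0 < e -> exists2 r, 0 < r & forall h : V, `|h| < r ->
     `|g (h + x) - g x - inner v0 h| <= e * `|h|) -> differentiable g x.
Proof.
move=> Ho.
pose glM := GRing.isLinear.Build _ _ _ _ _ (inner_linear v0).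
pose dL : {linear V -> R} := HB.pack (fun h : V => inner v0 h) glM.
have dLc : continuous dL.
  move=> y; have FF : ProperFilter (nbhs y) := nbhs_pfilter y.
  apply/cvgrPdist_lt => e e0.
  set K := n%:R * `|v0|.
  have K0 : 0 <= K by rewrite mulr_ge0.
  set r := e / (K + 1).
  have r0 : 0 < r by rewrite divr_gt0 // ltr_pwDr.
  near=> z.
  have Hyz : `|y - z| < r by near: z; exact: (@cvgr_dist_lt _ _ _ _ FF id y cvg_id r r0).
  rewrite /dL /= -innerBr (le_lt_trans (inner_le _ _)) // -/K.
  have : (K + 1) * `|y - z| < e by rewrite -ltr_pdivlMl ?ltr_pwDr // mulrC.
  have : 0 <= `|y - z| by [].
  lra.
have Hl : g \o shift x = cst (g x) + dL +o_ (0 : V) id.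
  apply/eqaddoP => e e0.
  have [r r0 Hr] := Ho e e0.
  apply/nbhs_ballP; exists r => // h; rewrite -ball_normE /= sub0r normrN => hr.
  by move: (Hr h hr); rewrite !fctE /= opprD addrA.
by apply/diff_locallyP; rewrite (diff_unique dLc Hl); split.
Unshelve. all: by end_near.
Qed.
End DiffO.

Section Step.
Variables (R : realType) (n : nat).
Notation V := 'rV[R]_n.
Variables (f : V -> \bar R) (lam : R) (x h v0 v : V) (gx g1 e : R).
Hypotheses (l0 : 0 < lam) (e0 : 0 < e) (fx : f x = gx%:E) (f1 : f (x + h) = g1%:E)
  (Hv0 : prox_subdiff lam f x v0) (Hv : prox_subdiff lam f (x + h) v)
  (h1 : `|h| <= 1) (he : (2 * (2 * lam)^-1 * n%:R + 1) * `|h| < e)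
  (hG : e * `|h| < `|g1 - gx - inner v0 h|).

Let c := (2 * lam)^-1.
Let N : R := n%:R.
Let s := v - v0.
Let mu := Num.max 1 `|s|.
Let gk := mu^-1 *: s.

Lemma c_gt0 : 0 < c. Proof. by rewrite invr_gt0 mulr_gt0. Qed.

Lemma step_s : e / 2 < N * `|s|.
Proof.
have GL := @G_lower _ _ f lam x h v0 gx g1 fx f1 Hv0.
have GU := @G_upper _ _ f lam x h v0 v gx g1 fx f1 Hv.
have SL := sqnorm_le h.
have c0 := c_gt0.
rewrite -/c -/s in GL GU.
have hN : 0 <= `|h| by [].
have hG' := hG.
set G := g1 - gx - inner v0 h in GL GU hG'.
have cS : c * sqnorm h <= c * N * `|h| * `|h|.
  by rewrite -!mulrA ler_pM2l // mulrA -expr2.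
have GL' : - (c * sqnorm h) <= G by rewrite mulrC.
have GU' : G <= inner s h + c * sqnorm h by rewrite mulrC.
have H2 : (2 * c * N) * `|h| * `|h| <= e * `|h|.
  by apply: ler_wpM2r => //; apply: ltW; have he2 := he; rewrite -/c -/N in he2; lra.
have Hin := ler_norm (inner s h).
have Hin2 := le_trans Hin (inner_le s h).
rewrite ltr_normr in hG'; case/orP: hG' => hG'.
- have H3 : e / 2 * `|h| < N * `|s| * `|h|.
    move: GL' GU' cS H2 Hin2 hG'; rewrite -/N; lra.
  have hpos : 0 < `|h|.
    rewrite lt_neqAle hN andbT; apply/negP => /eqP h0; move: H3; rewrite -h0 !mulr0; lra.
  by move: H3; rewrite ltr_pM2r.
- exfalso; have eh : 0 <= e * `|h| by rewrite mulr_ge0 // ltW.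
  move: GL' cS H2 hG' eh; lra.
Qed.


Lemma mu_ge1 : 1 <= mu. Proof. by rewrite le_max lexx. Qed.
Lemma mu_gt0 : 0 < mu. Proof. exact: lt_le_trans ltr01 mu_ge1. Qed.
Lemma s_le_mu : `|s| <= mu. Proof. by rewrite le_max lexx orbT. Qed.

Lemma norm_gk : `|gk| = mu^-1 * `|s|.
Proof. by rewrite normrZ normfV gtr0_norm // mu_gt0. Qed.

Lemma step_gk1 : `|gk| <= 1.
Proof. by rewrite norm_gk mulrC ler_pdivrMr ?mu_gt0 // mul1r s_le_mu. Qed.

Lemma step_gk2 : Num.min 1 (e / 2) <= N * `|gk|.
Proof.
have Hs := step_s.
have [s1|s1] := leP `|s| 1.
- rewrite norm_gk; have -> : mu = 1 by rewrite /mu max_l.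
  rewrite invr1 mul1r; apply: le_trans (ltW Hs); rewrite ge_min lexx orbT //.
- rewrite norm_gk; have -> : mu = `|s| by rewrite /mu max_r // ltW.
  rewrite mulVf ?gt_eqF ?(lt_trans ltr01) // mulr1.
  have N0 : 0 < N.
    have : 0 < N * `|s| by apply: lt_trans Hs; rewrite divr_gt0.
    by rewrite pmulr_lgt0 // (lt_trans ltr01).
  have N1 : 1 <= N by rewrite /N ler1n -(ltr0n R).
  by rewrite ge_min N1.
Qed.

Lemma step_gk3 y b : f y = b%:E ->
  inner gk (y - x) <= (b - gx - inner v0 (y - x) + sqnorm (y - x) / (2 * lam))
     + (2 * c * N * (1 + `|y - x|) + N) * `|h|.
Proof.
move=> fy.
have P := @pair_ineq _ _ f lam x h v0 v gx g1 fx f1 Hv0 Hv y b fy.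
have D0 := Hv0.2 y; rewrite fx fy -EFinD lee_fin in D0.
set D := b - gx - inner v0 (y - x) + sqnorm (y - x) / (2 * lam).
have D0' : 0 <= D by rewrite /D; lra.
rewrite -/s -/c in P.
set d := y - x in P D0 D0' *.
set del := (2 * sqnorm h - 2 * inner d h) * c in P.
have c0 := c_gt0.
have hN : 0 <= `|h| by [].
have Hdel : del <= 2 * c * N * (1 + `|d|) * `|h|.
  have S1 := sqnorm_le h.
  have I1 := ler_norm (- inner d h).
  have I2 : `|- inner d h| <= N * `|d| * `|h| by rewrite normrN inner_le.
  have H2 : `|h| ^+ 2 <= `|h| by rewrite expr2 ler_piMl.
  have : 2 * sqnorm h - 2 * inner d h <= 2 * N * (1 + `|d|) * `|h|.
    have : N * `|h| ^+ 2 <= N * `|h| by rewrite ler_wpM2l // ler0n.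
    lra.
  move=> H; have := ler_wpM2r (ltW c0) H; rewrite /del; lra.
have PD : inner s (d - h) <= D + del by exact: P.
have m0 : 0 < mu^-1 by rewrite invr_gt0 mu_gt0.
have m1 : mu^-1 <= 1 by rewrite invf_le1 ?mu_gt0 ?mu_ge1.
set K := 2 * c * N * (1 + `|d|).
have K0 : 0 <= K * `|h|.
  by rewrite mulr_ge0 // /K !mulr_ge0 ?ler0n ?ltW // addr_ge0.
have E1 : inner gk d = mu^-1 * inner s (d - h) + inner gk h.
  by rewrite -innerZl -/gk -innerDr subrK.
have E2 : mu^-1 * inner s (d - h) <= mu^-1 * (D + del) by rewrite ler_pM2l.
have E3 : mu^-1 * D <= D by rewrite ler_piMl.
have E4 : mu^-1 * del <= mu^-1 * (K * `|h|) by rewrite ler_pM2l.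
have E5 : mu^-1 * (K * `|h|) <= K * `|h| by rewrite ler_piMl.
have E6 : inner gk h <= N * `|h|.
  apply: le_trans (ler_norm _) _; apply: le_trans (inner_le _ _) _.
  by rewrite -/N ler_wpM2r // ler_piMr ?ler0n // step_gk1.
rewrite E1; move: E2 E3 E4 E5 E6 Hdel; rewrite -/K; lra.
Qed.

End Step.

Section Main.
Variables (R : realType) (n : nat).
Notation V := 'rV[R]_n.

Lemma diff_of_single (f : V -> \bar R) (lam : R) (U : set V) (x v0 : V) :
  0 < lam -> open U -> U x -> (forall y, U y -> f y = (fine (f y))%:E) ->
  (forall y, U y -> exists v, prox_subdiff lam f y v) ->
  prox_subdiff lam f x v0 -> (forall w, prox_subdiff lam f x w -> w = v0) ->
  differentiable (fun y => fine (f y)) x.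
Proof.
move=> l0 Uo Ux Ufin Hex Hv0 Huniq.
set g := fun y => fine (f y).
apply: (@diff_of_o _ _ g x v0) => e e0.
apply: contrapT => Hn.
have [r0 r00 Hr0] : exists2 r0, 0 < r0 & forall h : V, `|h| < r0 -> U (x + h).
  have : nbhs x U by exact: Uo.
  move=> /nbhs_ballP [r r0 Hr]; exists r => // h hr; apply: Hr.
  by rewrite -ball_normE /= opprD addNKr normrN.
set c := (2 * lam)^-1.
have c0 : 0 < c by rewrite invr_gt0 mulr_gt0.
set N : R := n%:R.
have N0 : 0 <= N by rewrite ler0n.
set r2 := e / (2 * c * N + 1).
have r20 : 0 < r2 by rewrite divr_gt0 // ltr_pwDr // !mulr_ge0 // ltW.
set r1 := Num.min r0 (Num.min 1 r2).
have r10 : 0 < r1 by rewrite !lt_min r00 ltr01 r20.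
have Hk : forall k : nat, exists h : V, [/\ `|h| < r1, `|h| < k.+1%:R^-1 &
     e * `|h| < `|g (x + h) - g x - inner v0 h|].
  move=> k; apply: contrapT => Hk; apply: Hn.
  exists (Num.min r1 k.+1%:R^-1); first by rewrite lt_min r10 invr_gt0 ltr0n.
  move=> h; rewrite lt_min => /andP[h1 h2]; rewrite leNgt; apply/negP => hgt.
  by apply: Hk; exists h; split => //; rewrite (addrC x).
have [hs Hhs] := choice Hk.
have Hex' : forall y, exists v, U y -> prox_subdiff lam f y v.
  move=> y; case: (pselect (U y)) => [Uy|nUy]; last by exists 0.
  by have [v Hv] := Hex y Uy; exists v.
have [vf Hvf] := choice Hex'.
pose gs k := let s := vf (x + hs k) - v0 in (Num.max 1 `|s|)^-1 *: s.
have Fk : forall k, [/\ `|gs k| <= 1, Num.min 1 (e / 2) <= N * `|gs k| &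
   forall y b, f y = b%:E -> inner (gs k) (y - x) <=
     (b - g x - inner v0 (y - x) + sqnorm (y - x) / (2 * lam))
     + (2 * c * N * (1 + `|y - x|) + N) * `|hs k|].
  move=> k; have [hr1 hk hG] := Hhs k.
  have Uk : U (x + hs k) by apply: Hr0; apply: lt_le_trans hr1 _; rewrite ge_min lexx.
  have fx := Ufin x Ux; have f1 := Ufin _ Uk.
  have Hv := Hvf _ Uk.
  have h1 : `|hs k| <= 1.
    by apply: ltW; apply: lt_le_trans hr1 _; rewrite !ge_min lexx orbT.
  have he : (2 * (2 * lam)^-1 * n%:R + 1) * `|hs k| < e.
    have : `|hs k| < r2 by apply: lt_le_trans hr1 _; rewrite !ge_min lexx !orbT.
    have q0 : 0 < 2 * c * N + 1 by rewrite ltr_pwDr // !mulr_ge0 // ltW.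
    by rewrite /r2 ltr_pdivlMr // mulrC.
  split.
  - exact: step_gk1.
  - exact: (step_gk2 l0 e0 fx f1 Hv0 Hv he hG).
  - exact: (step_gk3 l0 fx f1 Hv0 Hv h1).
pose A := closed_ball (0 : V) 1.
have Ac : compact A.
  apply: bounded_closed_compact; last exact: closed_ball_closed.
  exists 1; split => // M M1 z; rewrite /A closed_ballE // /closed_ball_ /= sub0r normrN.
  by move=> Hz; apply: le_trans Hz (ltW M1).
have [w [Aw Cw]] : A `&` cluster (gs @ \oo) !=set0.
  apply: (Ac (gs @ \oo) (fmap_proper_filter gs _)).
  exists 0%N => // k _; rewrite /A closed_ballE // /closed_ball_ /= sub0r normrN.
  by have [] := Fk k.
have Hcl : forall eta M0, 0 < eta -> exists2 k, (M0 <= k)%N & `|w - gs k| < eta.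
  move=> eta M0 eta0.
  have [] := Cw [set z | exists2 k, (M0 <= k)%N & z = gs k] (ball w eta).
  - by exists M0 => // k /= Nk; exists k.
  - exact: nbhsx_ballx.
  - by move=> z [[k Nk ->] Bk]; exists k => //; move: Bk; rewrite -ball_normE.
have tri : forall k, `|gs k| <= `|w| + `|w - gs k|.
  move=> k; have := ler_normB w (w - gs k).
  by rewrite (_ : w - (w - gs k) = gs k) // opprB addrC subrK.
have Hm : Num.min 1 (e / 2) <= N * `|w|.
  apply/ler_addgt0Pr => eps eps0.
  have N10 : 0 < N + 1 by rewrite ltr_pwDr.
  have [k _ Hk1] := Hcl (eps / (N + 1)) 0%N (divr_gt0 eps0 N10).
  have [_ F2 _] := Fk k.
  have T1 := tri k.
  have T2 : N * `|gs k| <= N * `|w| + N * `|w - gs k|.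
    by rewrite -mulrDr ler_wpM2l.
  have T3 : N * `|w - gs k| <= N * (eps / (N + 1)) by rewrite ler_wpM2l // ltW.
  have T4 : N * (eps / (N + 1)) <= eps.
    rewrite mulrA ler_pdivrMr //; lra.
  lra.
have Hw : prox_subdiff lam f x (v0 + w).
  split; first by rewrite (Ufin x Ux) ltry.
  move=> y; have := Hv0.2 y; case Efy : (f y) => [b| |]; last 2 first.
  - by move=> _; rewrite leey.
  - by rewrite (Ufin x Ux) -EFinD leeNy_eq.
  rewrite (Ufin x Ux) -!EFinD !lee_fin -/(g x) => D0.
  set d := y - x in D0 *.
  suff : inner w d <= b - g x - inner v0 d + sqnorm d / (2 * lam).
    by rewrite innerDl; lra.
  apply/ler_addgt0Pr => eps eps0.
  set K := 2 * c * N * (1 + `|d|) + N.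
  have K0 : 0 <= K by rewrite /K; apply: addr_ge0 => //; apply: mulr_ge0; [rewrite !mulr_ge0 // ltW | apply: addr_ge0].
  set M0 := Num.truncn (2 * K / eps).
  have HM0 : 2 * K / eps < M0.+1%:R by exact: truncnS_gt.
  have KM : K * M0.+1%:R^-1 <= eps / 2.
    rewrite ler_pdivrMr ?ltr0n //.
    move: HM0; rewrite ltr_pdivrMr // => HM0.
    by apply: ltW; move: HM0; lra.
  have Nd0 : 0 < 2 * (N * `|d| + 1) by rewrite mulr_gt0 // ltr_pwDr // mulr_ge0.
  have [k Mk Hk2] := Hcl (eps / (2 * (N * `|d| + 1))) M0 (divr_gt0 eps0 Nd0).
  have [_ _ F3] := Fk k.
  have F3' := F3 y b Efy; rewrite -/d -/K in F3'.
  have [_ hk _] := Hhs k.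
  have hK : K * `|hs k| <= K * M0.+1%:R^-1.
    rewrite ler_wpM2l //; apply: ltW; apply: lt_le_trans hk _.
    by rewrite lef_pV2 ?posrE ?ltr0n // ler_nat.
  have E1 : inner w d = inner (gs k) d + inner (w - gs k) d.
    by rewrite -innerDl addrC subrK.
  have E2 : inner (w - gs k) d <= N * `|w - gs k| * `|d|.
    exact: le_trans (ler_norm _) (inner_le _ _).
  have E3 : N * `|w - gs k| * `|d| <= N * (eps / (2 * (N * `|d| + 1))) * `|d|.
    by rewrite ler_wpM2r // ler_wpM2l // ltW.
  have E4 : N * (eps / (2 * (N * `|d| + 1))) * `|d| <= eps / 2.
    have -> : N * (eps / (2 * (N * `|d| + 1))) * `|d| =
      (N * `|d| * eps) / (2 * (N * `|d| + 1)) by ring.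
    rewrite ler_pdivrMr //; lra.
  rewrite E1; move: F3' hK KM E2 E3 E4.
  set X1 := K / _; set X2 := N * (eps / _) * _; set X3 := N * _ * `|d|; set X4 := K * _.
  lra.
have w0 : w = 0.
  by have := congr1 (fun z => z - v0) (Huniq _ Hw); rewrite /= subrr (addrC v0) addrK.
move: Hm; rewrite w0 normr0 mulr0 ge_min ler10 /=.
by rewrite leNgt divr_gt0.
Qed.
End Main.

Section Conv.
Variables (R : realType) (n : nat).
Notation V := 'rV[R]_n.

Lemma fin_of (a : \bar R) : a != -oo%E -> (a < +oo)%E -> a = (fine a)%:E.
Proof. by case: a. Qed.

Lemma conv_of_sub (f : V -> \bar R) (lam : R) (vf : V -> V) :
  0 < lam -> (forall y, f y = (fine (f y))%:E) ->
  (forall y, prox_subdiff lam f y (vf y)) ->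
  convex_efun (fun x => (f x + (lam^-1 * j x)%:E)%E).
Proof.
move=> l0 Ufin Hs x y t /andP[t0 t1] /=.
set z := t *: x + (1 - t) *: y.
rewrite (Ufin x) (Ufin y) (Ufin z) -!EFinD lee_fin.
have H1 := (Hs z).2 x; have H2 := (Hs z).2 y.
rewrite (Ufin x) (Ufin z) -EFinD lee_fin in H1.
rewrite (Ufin y) (Ufin z) -EFinD lee_fin in H2.
have E1 : x - z = (1 - t) *: (x - y) by apply/rowP => i; rewrite !mxE; ring.
have E2 : y - z = (- t) *: (x - y) by apply/rowP => i; rewrite !mxE; ring.
rewrite E1 sqnormZ innerZr in H1; rewrite E2 sqnormZ innerZr in H2.
set Fz := fine (f z) in H1 H2 *.
set Fx := fine (f x) in H1 H2 *.
set Fy := fine (f y) in H1 H2 *.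
set I := inner (vf z) (x - y) in H1 H2.
have A1 : t * (Fz + ((1 - t) * I - (1 - t) ^+ 2 * sqnorm (x - y) / (2 * lam)))
   <= t * Fx by rewrite ler_wpM2l.
have A2 : (1 - t) * (Fz + (- t * I - (- t) ^+ 2 * sqnorm (x - y) / (2 * lam)))
   <= (1 - t) * Fy by rewrite ler_wpM2l // subr_ge0.
rewrite sqnormB in A1 A2.
rewrite /j /z sqnormD !sqnormZ innerZl innerZr.
move: A1 A2; rewrite invfM.
set Sx := sqnorm x; set Sy := sqnorm y; set Ixy := inner x y.
set a := 2^-1; set b := lam^-1.
move=> A1 A2.
have Ha : a * 2 = 1 by rewrite /a mulVf.
nra.
Qed.
End Conv.

Section Conv2.
Variables (R : realType) (n : nat).
Notation V := 'rV[R]_n.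

Lemma sub_of_conv (f : V -> \bar R) (lam : R) (x : V) :
  0 < lam -> (forall y, f y = (fine (f y))%:E) ->
  convex_efun (fun x => (f x + (lam^-1 * j x)%:E)%E) ->
  differentiable (fun y => fine (f y)) x ->
  prox_subdiff lam f x (grad (fun y => fine (f y)) x).
Proof.
move=> l0 Ufin Hc dg; set g := fun y => fine (f y).
split; first by rewrite (Ufin x) ltry.
move=> y; rewrite (Ufin x) (Ufin y) -EFinD lee_fin -/(g x) -/(g y).
set d := y - x; set v := grad g x.
apply/ler_addgt0Pr => eps eps0.
have [t [t0 [Hd t1]]] := evpos_ex (evposI (@dlim _ _ g x d dg _ eps0) (evpos_small 1 ltr01)).
rewrite mulr1 in t1.
have t01 : 0 <= t <= 1 by rewrite ltW //= ltW.
have Hct := Hc y x t t01; rewrite /= in Hct.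
have Ez : t *: y + (1 - t) *: x = x + t *: d by apply/rowP => i; rewrite !mxE; ring.
rewrite Ez in Hct.
rewrite (Ufin (x + t *: d)) (Ufin x) (Ufin y) -!EFinD lee_fin in Hct.
rewrite -/(g x) -/(g y) -/(g (x + t *: d)) in Hct.
rewrite gradE -/v in Hd.
set Q := (g (x + t *: d) - g x) / t in Hd.
have QE : g (x + t *: d) = g x + Q * t by rewrite /Q divfK ?lt0r_neq0 //; ring.
rewrite QE /j sqnormD sqnormZ innerZr in Hct.
have Ed : sqnorm d = sqnorm y - 2 * inner x y + sqnorm x.
  by rewrite /d sqnormB innerC.
have Ei : inner x d = inner x y - sqnorm x by rewrite /d innerBr.
rewrite Ei in Hct.
rewrite invfM.
set b := lam^-1 in Hct *.
have b0 : 0 < b by rewrite invr_gt0.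
set Sx := sqnorm x in Hct Ed Ei *; set Sy := sqnorm y in Hct Ed *.
set Ixy := inner x y in Hct Ed Ei *.
set D2 := sqnorm d in Ed *.
have D20 : 0 <= D2 by rewrite /D2 sqnorm_ge0.
have K : t * Q <= t * (g y - g x + b * 2^-1 * (1 - t) * D2).
  rewrite Ed; move: Hct; rewrite -/D2 Ed; lra.
rewrite ler_pM2l // in K.
have K2 : 0 <= b * 2^-1 * t * D2 by rewrite !mulr_ge0 // ltW.
have Hd' := le_lt_trans (ler_norm _) Hd.
have Hd'' : inner v d - Q < eps by move: Hd; rewrite distrC; apply: le_lt_trans (ler_norm _).
move: K K2 Hd''; rewrite /D2; lra.
Qed.
End Conv2.

Unset Implicit Arguments.

Theorem mainTheorem8 (R : realType) (n : nat) (f : 'rV[R]_n -> \bar R) (lam : R) :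
  proper_efun f -> lower_semicontinuous f -> prox_bounded f ->
  (0 < prox_threshold f)%E -> 0 < lam -> (lam%:E < prox_threshold f)%E ->
  (forall U : set 'rV[R]_n, U !=set0 -> open U -> convex_set U ->
    ((forall x, U x -> exists v, prox_subdiff lam f x = [set v]) <->
     ((forall x, U x -> prox_hull lam f x = f x) /\ (forall x, U x -> ediff_at f x))))
  /\
  ((forall x, exists v, prox_subdiff lam f x = [set v]) <->
   (convex_efun (fun x => (f x + (lam^-1 * j x)%:E)%E) /\ (forall x, ediff_at f x))).
Proof.
move=> [Hp _] _ _ _ l0 _.
have Fwd : forall U : set 'rV[R]_n, open U ->
    (forall x, U x -> exists v, prox_subdiff lam f x = [set v]) ->
    (forall x, U x -> prox_hull lam f x = f x) /\ (forall x, U x -> ediff_at f x).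
  move=> U Uo Hs.
  have Hsub : forall x, U x -> exists v, prox_subdiff lam f x v.
    by move=> x Ux; have [v Hv] := Hs x Ux; exists v; rewrite Hv.
  have Ufin : forall y, U y -> f y = (fine (f y))%:E.
    move=> y Uy; have [v [Hv _]] := Hsub y Uy; exact: fin_of.
  split.
  - move=> x Ux; have [v Hv] := Hsub x Ux.
    exact: (hull_of_sub l0 (Ufin x Ux) Hv).
  - move=> x Ux; split; first by rewrite (Ufin x Ux).
    have [v Hv] := Hs x Ux.
    apply: (diff_of_single l0 Uo Ux Ufin Hsub (v0 := v)); first by rewrite Hv.
    by move=> w; rewrite Hv.
have Bwd : forall U : set 'rV[R]_n, open U -> (forall x, U x -> ediff_at f x) ->
    forall x, U x -> prox_subdiff lam f x (grad (fun y => fine (f y)) x) ->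
    prox_subdiff lam f x =
    [set grad (fun y => fine (f y)) x].
  move=> U Uo Hd x Ux Hg.
  have Ufin : forall y, U y -> f y = (fine (f y))%:E.
    by move=> y Uy; have [+ _] := Hd y Uy; case: (f y).
  apply/seteqP; split => w /=.
  - by move=> Hw; apply: (sub_eq_grad l0 Uo Ux Ufin (Hd x Ux).2 Hw).
  - by move=> ->.
split.
- move=> U _ Uo _; split; first exact: Fwd.
  move=> [Hh Hd] x Ux.
  have Ufin : forall y, U y -> f y = (fine (f y))%:E.
    by move=> y Uy; have [+ _] := Hd y Uy; case: (f y).
  exists (grad (fun y => fine (f y)) x); apply: (Bwd U Uo Hd x Ux).
  exact: (sub_of_hull Hp l0 Uo Ux Ufin (Hd x Ux).2 (Hh x Ux)).
- split.
  + move=> Hs; have [_ Hd] := Fwd setT openT (fun x _ => Hs x).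
    split; last by move=> x; exact: Hd.
    have Ufin : forall y, f y = (fine (f y))%:E.
      by move=> y; have [+ _] := Hd y I; case: (f y).
    have Hs' : forall x, exists v, prox_subdiff lam f x v.
      by move=> x; have [v Hv] := Hs x; exists v; rewrite Hv.
    have [vf Hvf] := choice Hs'.
    exact: (conv_of_sub l0 Ufin Hvf).
  + move=> [Hc Hd] x.
    have Ufin : forall y, f y = (fine (f y))%:E.
      by move=> y; have [+ _] := Hd y; case: (f y).
    exists (grad (fun y => fine (f y)) x).
    apply: (Bwd setT openT (fun y _ => Hd y) x I).
    exact: (sub_of_conv l0 Ufin Hc (Hd x).2).
Qed.
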